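(* Let $P=\{x\in\mathbb R^n : Ax=b,\ Bx\le d\}$ with $A\in\mathbb R^{m_A\times n}$, $B\in\mathbb R^{m_B\times n}$ be a pointed polyhedron and let $x_1,x_2$ be distinct points of $P$. Set $u:=x_2-x_1$ and let $C_{A,B,u}$ be the intersection of the cone $\{(x,y^+,y^-)\in\mathbb R^{n+2m_B} : Ax=0,\ Bx=y^+-y^-,\ y^+,y^-\ge 0\}$ with the hyperplanes $y^-_i=0$ for each $i$ with $(Bu)_i\ge 0$ and $y^+_i=0$ for each $i$ with $(Bu)_i\le 0$. Then for every extreme ray $(g,y^+,y^-)$ of $C_{A,B,u}$, the vector $g$ (which is a circuit direction of $P$ sign-compatible with $u$ with respect to $B$) is a strictly feasible direction at $x_1$ in $P$.
   Context: $P$ is pointed means $\operatorname{rank}\binom{A}{B}=n$. The circuits of $P$ are the $g\in\ker(A)\setminus\{0\}$ (normalized to coprime integer components) for which no $x\in\ker(A)\setminus\{0\}$ satisfies $\operatorname{supp}(Bx)\subsetneq\operatorname{supp}(Bg)$; a circuit direction is a positive multiple of a circuit. Vectors $x,y$ are sign-compatible with respect to $B$ if $(Bx)_i(By)_i\ge0$ for all $i$. A direction $g$ is strictly feasible at $x_1\in P$ if $x_1+\alpha g\in P$ for some $\alpha>0$. *)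

(* Defs.v *)
From HB Require Import structures.
From mathcomp Require Import all_boot all_order all_algebra.
Set Implicit Arguments. Unset Strict Implicit. Unset Printing Implicit Defensive.
Import Order.TTheory GRing.Theory Num.Theory.
Local Open Scope ring_scope.

Definition in_poly (R : realFieldType) (n mA mB : nat)
  (A : 'M[R]_(mA, n)) (b : 'cV[R]_mA) (B : 'M[R]_(mB, n)) (d : 'cV[R]_mB)
  (x : 'cV[R]_n) : Prop :=
  A *m x = b /\ forall i : 'I_mB, (B *m x) i 0 <= d i 0.

Definition pointed (R : realFieldType) (n mA mB : nat)
  (A : 'M[R]_(mA, n)) (B : 'M[R]_(mB, n)) : Prop :=
  \rank (col_mx A B) = n.

Definition cone_ABu (R : realFieldType) (n mA mB : nat)
  (A : 'M[R]_(mA, n)) (B : 'M[R]_(mB, n)) (u : 'cV[R]_n)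
  (z : 'cV[R]_n * 'cV[R]_mB * 'cV[R]_mB) : Prop :=
  let: (x, yp, ym) := z in
  [/\ A *m x = 0, B *m x = yp - ym,
      (forall i : 'I_mB, 0 <= yp i 0 /\ 0 <= ym i 0),
      (forall i : 'I_mB, 0 <= (B *m u) i 0 -> ym i 0 = 0) &
      (forall i : 'I_mB, (B *m u) i 0 <= 0 -> yp i 0 = 0)].

Definition extreme_ray (R : realFieldType) (V : lmodType R) (C : V -> Prop)
  (r : V) : Prop :=
  [/\ C r, r != 0 &
      forall v w : V, C v -> C w -> r = v + w ->
        exists2 l : R, 0 <= l & v = l *: r].

Definition strictly_feasible (R : realFieldType) (n mA mB : nat)
  (A : 'M[R]_(mA, n)) (b : 'cV[R]_mA) (B : 'M[R]_(mB, n)) (d : 'cV[R]_mB)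
  (x1 g : 'cV[R]_n) : Prop :=
  exists2 alpha : R, 0 < alpha & in_poly A b B d (x1 + alpha *: g).

(* Main.v *)
Require Import Defs.
From HB Require Import structures.
From mathcomp Require Import all_boot all_order all_algebra.
From mathcomp Require Import lra.
Import Order.TTheory GRing.Theory Num.Theory.
Local Open Scope ring_scope.

Lemma small_common (R : realFieldType) (I : finType) (P : I -> R -> Prop) :
  (forall i a b, 0 < a -> a <= b -> P i b -> P i a) ->
  (forall i, exists2 a, 0 < a & P i a) ->
  exists2 a, 0 < a & forall i, P i a.
Proof.
move=> Pdown Pex.
suff [a a0 Ha] : exists2 a, 0 < a & forall i, i \in enum I -> P i a.
  by exists a => // i; apply: Ha; rewrite mem_enum.
elim: (enum I) => [|j s [a a0 Ha]]; first by exists 1.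
have [c c0 Hc] := Pex j.
exists (Num.min a c); first by rewrite lt_min a0 c0.
move=> i; rewrite inE => /orP [/eqP -> | /Ha Hi].
  by apply: (Pdown _ _ c) => //; [rewrite lt_min a0 c0 | rewrite ge_min lexx orbT].
by apply: (Pdown _ _ a) => //; [rewrite lt_min a0 c0 | rewrite ge_min lexx].
Qed.

Theorem corollary4 (R : realFieldType) (n mA mB : nat)
  (A : 'M[R]_(mA, n)) (b : 'cV[R]_mA) (B : 'M[R]_(mB, n)) (d : 'cV[R]_mB)
  (x1 x2 : 'cV[R]_n) :
  pointed A B ->
  in_poly A b B d x1 -> in_poly A b B d x2 -> x1 != x2 ->
  forall (g : 'cV[R]_n) (yp ym : 'cV[R]_mB),
    extreme_ray (cone_ABu A B (x2 - x1)) (g, yp, ym) ->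
    strictly_feasible A b B d x1 g.
Proof.
move=> _ [Ax1 Bx1] [Ax2 Bx2] _ g yp ym [[Ag Bg Hy Hm Hp] _ _].
have key : forall i, 0 < (B *m g) i 0 -> 0 < d i 0 - (B *m x1) i 0.
  move=> i gi.
  have ypi : 0 < yp i 0.
    have := Hy i; move: gi; rewrite Bg !mxE => gi [h1 h2]; apply: lt_le_trans gi _; by rewrite lerBlDr lerDl.
  have ui : 0 < (B *m (x2 - x1)) i 0.
    by rewrite ltNge; apply/negP => /Hp yi; rewrite yi ltxx in ypi.
  move: ui; rewrite mulmxBr mxE => ui; apply: lt_le_trans ui _; rewrite [X in _ + X <= _]mxE; exact: lerB (Bx2 i) (lexx _).
set P := (fun (i : 'I_mB) (a : R) => (B *m x1) i 0 + a * (B *m g) i 0 <= d i 0).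
have Pdown : forall i (a c : R), 0 < a -> a <= c -> P i c -> P i a.
  rewrite /P => i a c a0 ac Hc.
  have [gi|gi] := leP 0 ((B *m g) i 0).
    apply: le_trans Hc; rewrite lerD2l; exact: ler_wpM2r.
  have h : a * (B *m g) i 0 <= 0 by rewrite pmulr_rle0 // ltW.
  apply: le_trans (Bx1 i); by rewrite gerDl.
have Pex : forall i, exists2 a : R, 0 < a & P i a.
  move=> i; rewrite /P.
  have [gi|gi] := ltP 0 ((B *m g) i 0).
    exists ((d i 0 - (B *m x1) i 0) / (B *m g) i 0).
      by rewrite divr_gt0 // key.
    by rewrite mulfVK ?gt_eqF // addrC subrK.
  exists 1 => //; rewrite mul1r; apply: le_trans (Bx1 i); by rewrite gerDl.
have [a a0 Ha] := @small_common R _ P Pdown Pex.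
exists a => //; split.
  by rewrite mulmxDr -scalemxAr Ag scaler0 addr0.
by move=> i; rewrite mulmxDr -scalemxAr mxE [X in _ + X]mxE; apply: Ha.
Qed.
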